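(* Let $u=s_{i_1}\cdots s_{i_l}$ and $v=s_{j_1}\cdots s_{j_m}$ ($m\ge1$) be reduced words for glides in $\hat S_n$, $v$ of offset $k_2$, such that $vu$ is reduced, and let $\alpha_1,\dots,\alpha_n\in\mathbb R$ satisfy $\alpha_i<\alpha_j$ whenever $i\triangleleft j$ in the wiring diagram of $v|u$. Let $\tilde v=\rho^{-k_2}(v)$ with reduced word $s_{j_1-k_2}\cdots s_{j_m-k_2}$. Let $b>c$ be real numbers in the same connected component of $\mathbb R\setminus\{\alpha_1,\dots,\alpha_n\}$ with $f(b)=f(c)$, where $f(t)=\prod_{j=1}^n(t-\alpha_j)$, and put $B_j=\frac{b-\alpha_j}{c-\alpha_j}$. If $(t'_1,\dots,t'_n)$ is a representative of $t(\tilde v)$, then $$t'_1\log B_1+\dots+t'_n\log B_n<0.$$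
   Context: $\hat S_n$: generators $s_0,\dots,s_{n-1}$ (indices mod $n$), relations $s_i^2=1$, $s_is_js_i=s_js_is_j$ if $i-j\equiv\pm1$, $s_is_j=s_js_i$ if $i-j\not\equiv0,\pm1$; $\rho$ is the automorphism $s_i\mapsto s_{i+1}$. $\phi:\hat S_n\to S_n$, $s_i\mapsto(i\ i+1)$, $s_0\mapsto(1\ n)$; a glide of offset $k$ is $g$ with $\phi(g)(j)\equiv j+k\pmod n$. Wiring diagram: letters drawn left to right on a cylinder with wires in positions $1,\dots,n$ (mod $n$), $s_i$ a crossing of positions $i,i+1$ ($s_0$: $n$ and $1$); the upper wire of $s_i$ passes from position $i+1$ to $i$ (for $s_0$ from $1$ to $n$). In the diagram of $v|u$, wire $i$ is the wire in position $i$ at the cut between $v$ and $u$, and $i\triangleleft j$ means wires $i,j$ cross with $j$ the upper wire. Trajectory of a glide $g$ with a reduced word: lift the diagram of $|g$ to the universal cover (integer positions, wires labelled by starting position); a chamber with set $S$ of underlying wire labels has label $(\mathbf s_i)$, $\mathbf s_i=\lceil\max\{b\in S:b\equiv i\bmod n\}/n\rceil$; $t(g)\in\mathbb Z^n/\mathbb Z(1,\dots,1)$ is the label of the chamber directly above wire $1$ at the right end minus that at the left end. *)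

(* Defs.v *)
From HB Require Import structures.
From mathcomp Require Import all_boot all_order all_algebra.
From mathcomp Require Import reals exp.

Set Implicit Arguments.
Unset Strict Implicit.
Unset Printing Implicit Defensive.

Import Order.TTheory GRing.Theory Num.Theory.
Local Open Scope ring_scope.

(* A word s_{i_1} ... s_{i_l} in the generators of \hat S_n is the list
   [:: i_1; ...; i_l] of natural numbers < n (read left to right). *)
Definition is_word (n : nat) (w : seq nat) : bool := all (fun i => (i < n)%N) w.

Definition adjn (n i j : nat) : bool :=
  (i.+1 %% n == j %% n)%N || (j.+1 %% n == i %% n)%N.

(* The congruence on words generated by the defining relations of \hat S_n:
   two words represent the same element of \hat S_n iff they are related. *)
Inductive wequiv (n : nat) : seq nat -> seq nat -> Prop :=
| weq_refl w : wequiv n w w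
| weq_sym w1 w2 : wequiv n w1 w2 -> wequiv n w2 w1
| weq_trans w1 w2 w3 : wequiv n w1 w2 -> wequiv n w2 w3 -> wequiv n w1 w3
| weq_ctx a b x y : wequiv n x y -> wequiv n (a ++ x ++ b) (a ++ y ++ b)
| weq_sq i : (i < n)%N -> wequiv n [:: i; i] [::]
| weq_braid i j : (i < n)%N -> (j < n)%N -> adjn n i j ->
    wequiv n [:: i; j; i] [:: j; i; j]
| weq_comm i j : (i < n)%N -> (j < n)%N -> i != j -> ~~ adjn n i j ->
    wequiv n [:: i; j] [:: j; i].

Definition reduced (n : nat) (w : seq nat) : Prop :=
  is_word n w /\
  forall w', is_word n w' -> wequiv n w w' -> (size w <= size w')%N.

(* The transposition phi(s_i) = (i i+1) (phi(s_0) = (1 n)), acting on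
   positions, here written on integer representatives of positions mod n.
   On the universal cover it is also the swap of positions p, p+1, p = i mod n. *)
Definition tau (n i : nat) (x : int) : int :=
  if (x %% n)%Z == i%:Z then x + 1
  else if ((x - 1) %% n)%Z == i%:Z then x - 1 else x.

Definition phi (n : nat) (g : seq nat) (x : int) : int := foldr (tau n) x g.

Definition glide (n : nat) (g : seq nat) (k : int) : Prop :=
  forall j : nat, (1 <= j <= n)%N -> (phi n g j %% n)%Z = ((j%:Z + k) %% n)%Z.

Definition rho_shift (n : nat) (k : int) (v : seq nat) : seq nat :=
  map (fun j => `|((j%:Z - k) %% n)%Z|%N) v.

(* Lifted wiring diagram (universal cover): a state maps each integer
   position to the label of the wire occupying it.  Letter s_i swaps the
   contents of positions p and p+1 for every p = i (mod n). *)
Definition step (n i : nat) (st : int -> int) : int -> int :=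
  fun p => st (tau n i p).

Definition lstate (n : nat) (w : seq nat) : int -> int :=
  foldl (fun st i => step n i st) (fun p => p) w.

(* the wire on the cylinder (numbered 1..n) underlying a lifted wire label *)
Definition cyl (n : nat) (a : int) : nat := (`|((a - 1) %% n)%Z|%N).+1.

(* Crossings in the diagram of v|u, wires labelled by their position at the
   cut.  (i, j) : wire i is the lower wire and wire j the upper wire.
   In the u-part (right of the cut) we run u forward from the cut; the state
   before a letter s_i has the upper wire at p+1 and the lower one at p. *)
Definition cross_right (n : nat) (u : seq nat) (i j : nat) : Prop :=
  exists k : nat, (k < size u)%N /\
    exists p : int, (p %% n)%Z = (nth 0%N u k)%:Z /\
      cyl n (lstate n (take k u) p) = i /\
      cyl n (lstate n (take k u) (p + 1)) = j.

(* In the v-part (left of the cut) we run v backwards from the cut; the state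
   just right of a letter s_i has the upper wire at p and the lower at p+1. *)
Definition cross_left (n : nat) (v : seq nat) (i j : nat) : Prop :=
  exists k : nat, (k < size v)%N /\
    exists p : int, (p %% n)%Z = (nth 0%N (rev v) k)%:Z /\
      cyl n (lstate n (take k (rev v)) (p + 1)) = i /\
      cyl n (lstate n (take k (rev v)) p) = j.

Definition tri (n : nat) (v u : seq nat) (i j : nat) : Prop :=
  cross_left n v i j \/ cross_right n u i j.

Definition ceil_div (n : nat) (b : int) : int := - ((- b) %/ n%:Z)%Z.

(* lab is the label of the chamber lying just above position q (between
   positions q and q+1) in the lifted state st: the underlying wire labels
   are S = { st x | x <= q } and lab_i = ceil(max{b in S | b = i mod n} / n). *)
Definition chamber_label (n : nat) (st : int -> int) (q : int)
    (lab : nat -> int) : Prop :=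
  forall i : nat, (1 <= i <= n)%N -> exists b : int,
    (exists x : int, x <= q /\ st x = b) /\
    (b %% n)%Z = (i%:Z %% n)%Z /\
    (forall x : int, x <= q -> (st x %% n)%Z = (i%:Z %% n)%Z -> st x <= b) /\
    lab i = ceil_div n b.

Definition above_wire1 (n : nat) (st : int -> int) (lab : nat -> int) : Prop :=
  exists q : int, st q = 1 /\ chamber_label n st q lab.

(* t is a representative of the trajectory t(g) in Z^n / Z(1,...,1), computed
   from the reduced word g: right-end label minus left-end label. *)
Definition traj_rep (n : nat) (g : seq nat) (t : nat -> int) : Prop :=
  exists L R : nat -> int,
    above_wire1 n (fun p => p) L /\ above_wire1 n (lstate n g) R /\
    exists c : int, forall i : nat, (1 <= i <= n)%N -> t i = R i - L i + c.

(* Main.v *)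
Require Import Defs.
From HB Require Import structures.
From mathcomp Require Import all_boot all_order all_algebra.
From mathcomp Require Import reals exp.
From mathcomp Require Import zify ring lra.
From Stdlib Require Import Classical.
Import Order.TTheory GRing.Theory Num.Theory.
Local Open Scope ring_scope.

Lemma modz_dec (n : nat) (x : int) : (0 < n)%N ->
  exists q, x = q * n%:Z + (x %% n)%Z /\ 0 <= (x %% n)%Z < n%:Z.
Proof.
move=> n0; exists (x %/ n)%Z; split; first exact: divz_eq.
by rewrite modz_ge0 ?ltz_pmod //; last by rewrite -lt0n.
Qed.

Lemma modz_char (n : nat) (x q r : int) : 0 <= r < n%:Z -> x = q * n%:Z + r ->
  (x %% n)%Z = r.
Proof. by move=> hr ->; rewrite modzMDl modz_small. Qed.

Lemma mulz_small (n:nat) (e c : int) : (0<n)%N -> e * n%:Z = c -> -(n%:Z) < c < n%:Z -> e = 0.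
Proof.
move=> n0 E hc.
have [h|[h|h]] : (e <= -1) \/ (e = 0) \/ (1 <= e) by lia.
- have : e * n%:Z <= - n%:Z by nia.
  lia.
- done.
- have : n%:Z <= e * n%:Z by nia.
  lia.
Qed.

Lemma modz_eqP (n : nat) (x y : int) : (0 < n)%N ->
  (x %% n)%Z = (y %% n)%Z <-> exists e, x = y + e * n%:Z.
Proof.
move=> n0; split.
- move=> E; have [q1 [h1 _]] := modz_dec n x n0; have [q2 [h2 _]] := modz_dec n y n0.
  exists (q1 - q2). rewrite E in h1. rewrite mulrBl; lia.
- move=> [e ->]; by rewrite addrC modzMDl.
Qed.

Lemma modz_succ_neq (n : nat) (x : int) : (2 <= n)%N -> ((x+1) %% n)%Z <> (x %% n)%Z.
Proof.
move=> n2 E; have n0 : (0 < n)%N by apply: ltnW.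
have [e He] := (modz_eqP _ _ _ n0).1 E.
have : e = 0 by apply: (mulz_small n e 1 n0); lia.
move=> e0; rewrite e0 in He; lia.
Qed.

Lemma tau_cases n i x :
  (tau n i x = x + 1 /\ (x %% n)%Z = i%:Z) \/
  (tau n i x = x - 1 /\ (x %% n)%Z <> i%:Z /\ ((x - 1) %% n)%Z = i%:Z) \/
  (tau n i x = x /\ (x %% n)%Z <> i%:Z /\ ((x - 1) %% n)%Z <> i%:Z).
Proof.
rewrite /tau; case: eqP => h1; first by left.
by case: eqP => h2; right; [left|right].
Qed.

Lemma tau_per n i x : tau n i (x + n%:Z) = tau n i x + n%:Z.
Proof.
rewrite /tau modzDr.
have -> : (x + n%:Z - 1 = (x - 1) + n%:Z) by ring.
rewrite modzDr.
case: ifP => _; first ring. case: ifP => _; ring.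
Qed.

Lemma tau_invol n i x : (2 <= n)%N -> tau n i (tau n i x) = x.
Proof.
move=> n2.
case: (tau_cases n i x) => [[-> h]|[[-> [h1 h2]]|[-> [h1 h2]]]].
- rewrite /tau; case: eqP => h'.
  + exfalso; apply: (modz_succ_neq n x n2); by rewrite h' h.
  + by rewrite addrK h eqxx.
- by rewrite /tau h2 eqxx subrK.
- by rewrite /tau; move/eqP/negbTE: h1 => ->; move/eqP/negbTE: h2 => ->.
Qed.

Lemma tau_cross n i x y : x < y -> tau n i y < tau n i x ->
  (x %% n)%Z = i%:Z /\ y = x + 1.
Proof.
move=> xy.
case: (tau_cases n i x) => [[-> h]|[[-> [h1 h2]]|[-> [h1 h2]]]];
case: (tau_cases n i y) => [[-> h']|[[-> [h1' h2']]|[-> [h1' h2']]]]; 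
  try lia.
all: move=> lt.
all: try (split; [done| lia]).
all: have ey : y = x + 1 by lia.
all: by exfalso; apply: h1; rewrite -h2' ey addrK.
Qed.

Lemma absz_mod (n : nat) (m : int) : (0 < n)%N -> (`|(m %% n)%Z|%N)%:Z = (m %% n)%Z.
Proof.
move=> n0; apply: gez0_abs; apply: modz_ge0; by rewrite -lt0n.
Qed.

Lemma tau_shift n (j : nat) (k x : int) : (0 < n)%N -> (j < n)%N ->
  tau n `|((j%:Z - k) %% n)%Z|%N x = tau n j (x + k) - k.
Proof.
move=> n0 jn; rewrite /tau absz_mod //.
have jm : (j%:Z %% n)%Z = j%:Z by rewrite modz_small //; lia.
have E1 : ((x %% n)%Z == ((j%:Z - k) %% n)%Z) = (((x + k) %% n)%Z == j%:Z).
  rewrite -{2}jm.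
  apply/idP/idP => /eqP /(modz_eqP _ _ _ n0) [e He]; apply/eqP/(modz_eqP _ _ _ n0);
  exists e; lia.
have E2 : (((x - 1) %% n)%Z == ((j%:Z - k) %% n)%Z) = (((x + k - 1) %% n)%Z == j%:Z).
  rewrite -{2}jm.
  apply/idP/idP => /eqP /(modz_eqP _ _ _ n0) [e He]; apply/eqP/(modz_eqP _ _ _ n0);
  exists e; lia.
rewrite E1 E2; case: ifP => _; first ring. case: ifP => _; ring.
Qed.

Lemma phi_cons n i w x : phi n (i :: w) x = tau n i (phi n w x).
Proof. by []. Qed.

Lemma phi_rcons n w i x : phi n (rcons w i) x = phi n w (tau n i x).
Proof. by rewrite /phi foldr_rcons. Qed.

Lemma phi_per n w x : phi n w (x + n%:Z) = phi n w x + n%:Z.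
Proof. by elim: w => [|i w IH] //=; rewrite IH tau_per. Qed.

Lemma phi_perN n w x (m : nat) : phi n w (x + m%:Z * n%:Z) = phi n w x + m%:Z * n%:Z.
Proof.
elim: m x => [|m IH] x; first by rewrite mul0r !addr0.
have -> : x + m.+1%:Z * n%:Z = (x + m%:Z * n%:Z) + n%:Z.
  by rewrite intS mulrDl mul1r addrA addrAC.
by rewrite phi_per IH intS mulrDl mul1r addrA addrAC.
Qed.

Lemma phi_perM n w x (e : int) : phi n w (x + e * n%:Z) = phi n w x + e * n%:Z.
Proof.
case: e => m; first exact: phi_perN.
rewrite NegzE.
have := phi_perN n w (x - m.+1%:Z * n%:Z) m.+1; rewrite subrK => ->.
rewrite mulNr. ring.
Qed.

Lemma phi_rev n w x : (2 <= n)%N -> phi n w (phi n (rev w) x) = x.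
Proof.
move=> n2; elim: w x => [|i w IH] x //=.
by rewrite rev_cons phi_rcons IH tau_invol.
Qed.

Lemma phi_rev' n w x : (2 <= n)%N -> phi n (rev w) (phi n w x) = x.
Proof. move=> n2; have := phi_rev n (rev w) x n2; by rewrite revK. Qed.

Lemma lstate_phi n w p : lstate n w p = phi n w p.
Proof.
elim/last_ind: w p => [|w i IH] p //.
by rewrite /lstate foldl_rcons -/(lstate n w) /step IH phi_rcons.
Qed.

Lemma phi_shift n (k : int) v x : (0 < n)%N -> is_word n v ->
  phi n (rho_shift n k v) x = phi n v (x + k) - k.
Proof.
move=> n0; elim: v => [|j v IH] /=; first by rewrite addrK.
move=> /andP [jn hv]; rewrite tau_shift // IH // subrK //.
Qed.

(* positions of wires in the v part, going backwards from the cut *)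
Definition pos n (v : seq nat) (k : nat) (A : int) : int :=
  phi n (rev (take k (rev v))) A.

Lemma pos0 n v A : pos n v 0 A = A.
Proof. by rewrite /pos take0. Qed.

Lemma posS n v k A : (k < size v)%N ->
  pos n v k.+1 A = tau n (nth 0%N (rev v) k) (pos n v k A).
Proof.
move=> kv; rewrite /pos (take_nth 0%N); last by rewrite size_rev.
by rewrite rev_rcons phi_cons.
Qed.

Lemma pos_end n v A : pos n v (size v) A = phi n v A.
Proof. by rewrite /pos -size_rev take_size revK. Qed.

Lemma pos_state n v k A : (2 <= n)%N ->
  lstate n (take k (rev v)) (pos n v k A) = A.
Proof. move=> n2; by rewrite lstate_phi /pos phi_rev. Qed.

Lemma pos_inj n v k A B : (2 <= n)%N -> pos n v k A = pos n v k B -> A = B.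
Proof.
move=> n2 E; by rewrite -(pos_state n v k A n2) -(pos_state n v k B n2) E.
Qed.

Lemma step_cross n v k A B : (2 <= n)%N -> (k < size v)%N ->
  pos n v k A < pos n v k B -> pos n v k.+1 B < pos n v k.+1 A ->
  cross_left n v (cyl n B) (cyl n A).
Proof.
move=> n2 kv h1; rewrite !posS // => h2.
have [hm hB] := tau_cross _ _ _ _ h1 h2.
exists k; split => //; exists (pos n v k A); split => //.
by rewrite -hB !pos_state.
Qed.

Lemma ivt (f g : nat -> int) (k0 m : nat) : (k0 <= m)%N ->
  (forall k, f k <> g k) -> f k0 < g k0 -> g m < f m ->
  exists k, (k0 <= k < m)%N /\ f k < g k /\ g k.+1 < f k.+1.
Proof.
move=> km hne h0; elim: m km => [|m IH] km hm.
- have k00 : k0 = 0%N by lia.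
  by subst k0; exfalso; move: (lt_asym (f 0%N) (g 0%N)); rewrite h0 hm.
- have km' : (k0 <= m)%N.
    case: (ltnP m k0) => // mk; have e : k0 = m.+1 by lia.
    by subst k0; exfalso; move: (lt_asym (f m.+1) (g m.+1)); rewrite h0 hm.
  case: (ltgtP (f m) (g m)) => h.
  + exists m; split; [lia| by []].
  + have [k [hk [h1 h2]]] := IH km' h. exists k; split => //; lia.
  + by exfalso; apply: (hne m).
Qed.

Lemma cyl_nat n (i : nat) : (1 <= i <= n)%N -> cyl n i%:Z = i.
Proof.
move=> hi; rewrite /cyl.
have -> : (i%:Z - 1 = (i.-1)%:Z) by lia.
rewrite modz_small; last by lia.
by rewrite absz_nat; lia.
Qed.

Lemma cyl_per n x : cyl n (x + n%:Z) = cyl n x.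
Proof. by rewrite /cyl (addrAC x) modzDr. Qed.

Section Alpha.
Variable R : realType.

Lemma cross_main n v (alpha : nat -> R) (A B : int) : (2 <= n)%N ->
  (forall i j, cross_left n v i j -> alpha i < alpha j) ->
  A < B -> phi n v B < phi n v A -> alpha (cyl n B) < alpha (cyl n A).
Proof.
move=> n2 Hal AB sBA.
have [k [hk [h1 h2]]] := ivt (fun k => pos n v k A) (fun k => pos n v k B)
   0%N (size v) (leq0n _)
   (fun k E => ltac:(have := pos_inj n v k A B n2 E; lia))
   ltac:(by rewrite /= !pos0) ltac:(by rewrite /= !pos_end).
apply: Hal; apply: (step_cross n v k A B n2) => //; lia.
Qed.

Lemma strict_cross n v (alpha : nat -> R) (p : int) : (2 <= n)%N ->
  (1 <= size v)%N ->
  (forall i j, cross_left n v i j -> alpha i < alpha j) ->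
  (p %% n)%Z = (nth 0%N (rev v) 0)%:Z ->
  phi n v p < phi n v (p + 1) -> False.
Proof.
move=> n2 v1 Hal hp hs.
have t1 : pos n v 1 p = p + 1.
  by rewrite posS // pos0 /tau hp eqxx.
have t2 : pos n v 1 (p + 1) = p.
  by rewrite posS // pos0 -t1 posS // pos0 tau_invol.
have c1 : alpha (cyl n (p + 1)) < alpha (cyl n p).
  apply: Hal; apply: (step_cross n v 0 p (p+1) n2) => //; rewrite ?pos0 ?t1 ?t2; lia.
have [k [hk [h1 h2]]] := ivt (fun k => pos n v k (p + 1)) (fun k => pos n v k p)
   1%N (size v) v1
   (fun k E => ltac:(have := pos_inj n v k _ _ n2 E; lia))
   ltac:(by rewrite /= t1 t2; lia) ltac:(by rewrite /= !pos_end).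
have c2 : alpha (cyl n p) < alpha (cyl n (p + 1)).
  apply: Hal; apply: (step_cross n v k (p+1) p n2) => //; lia.
by move: (lt_asym (alpha (cyl n p)) (alpha (cyl n (p + 1)))); rewrite c1 c2.
Qed.

End Alpha.

Definition aa n v (k : int) (y : int) : int := ((phi n v y - y - k) %/ n)%Z.

Lemma aa_spec n v k y : (2 <= n)%N -> glide n v k ->
  phi n v y = y + k + aa n v k y * n%:Z.
Proof.
move=> n2 hg; have n0 : (0 < n)%N by lia.
have [e [he hr]] := modz_dec n (y - 1) n0.
set r := ((y - 1) %% n)%Z in he hr.
have hj : (1 <= `|r|.+1 <= n)%N by lia.
have jr : (`|r|.+1)%:Z = r + 1 by lia.
have := hg _ hj; rewrite jr => /(modz_eqP _ _ _ n0) [e' he'].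
have ey : y = (r + 1) + e * n%:Z by lia.
rewrite /aa.
have -> : phi n v y = y + k + e' * n%:Z by rewrite {1}ey phi_perM he'; lia.
have -> : (y + k + e' * n%:Z - y - k = e' * n%:Z)%R by ring.
rewrite mulzK //; lia.
Qed.

Lemma aa_per n v k y e : aa n v k (y + e * n%:Z) = aa n v k y.
Proof.
rewrite /aa phi_perM; congr (_ %/ _)%Z; ring.
Qed.

Lemma ceil_shift n z e : (0 < n)%N -> ceil_div n (z + e * n%:Z) = ceil_div n z + e.
Proof.
move=> n0; rewrite /ceil_div.
have -> : - (z + e * n%:Z) = (- e) * n%:Z + (- z) by ring.
rewrite divzMDl; last by lia.
ring.
Qed.

Lemma ceil_one n : (2 <= n)%N -> ceil_div n 1 = 1.
Proof.
move=> n2; rewrite /ceil_div.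
have -> : - (1 : int) = (- 1) * n%:Z + (n%:Z - 1) by ring.
rewrite divzMDl; last by lia.
rewrite divz_small; last by rewrite absz_nat; lia.
by [].
Qed.

Lemma ceil_small n z : (0 < n)%N -> - n%:Z < z <= 0 -> ceil_div n z = 0.
Proof.
move=> n0 hz; rewrite /ceil_div divz_small //; rewrite absz_nat; lia.
Qed.

Lemma chamber n (st : int -> int) (K : int) (g : int -> int) (Rl : nat -> int) :
  (2 <= n)%N -> (forall x, st x = x + K + g (x + K) * n%:Z) ->
  (forall y e, g (y + e * n%:Z) = g y) -> above_wire1 n st Rl ->
  forall i, (1 <= i <= n)%N -> Rl i = (if i == 1%N then 1 else 0) + g i%:Z - g 1.
Proof.
move=> n2 hst hg [q [hq hcl]] i hi.
have n0 : (0 < n)%N by lia.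
have [b [[x0 [hx0 hb]] [hbi [hmax hR]]]] := hcl i hi.
rewrite hR.
have hg1 : forall y, g (y + n%:Z) = g y.
  by move=> y; have := hg y 1; rewrite mul1r.
have hx0' : q - n%:Z < x0.
  rewrite ltNge; apply/negP => hle.
  have h1 : st (x0 + n%:Z) = b + n%:Z.
    by rewrite hst -hb hst (addrAC x0) hg1; ring.
  have := hmax (x0 + n%:Z) ltac:(lia).
  rewrite h1 modzDr => /(_ hbi); lia.
rewrite hst in hq.
have eQ : q + K = 1 + (- g (q + K)) * n%:Z by lia.
have gQ : g (q + K) = g 1 by rewrite {1}eQ hg.
have [e he] := (modz_eqP _ _ _ n0).1 hbi.
have hb' : b = (x0 + K) + g (x0 + K) * n%:Z by rewrite -hb hst.
have gy : g (x0 + K) = g i%:Z.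
  have -> : x0 + K = i%:Z + (e - g (x0 + K)) * n%:Z.
    rewrite mulrBl; lia.
  by rewrite hg.
rewrite gy in hb'; rewrite gQ in hq.
set z := x0 + K + g 1 * n%:Z.
have -> : b = z + (g i%:Z - g 1) * n%:Z by rewrite hb' /z mulrBl; lia.
rewrite ceil_shift //.
have zb : 1 - n%:Z < z <= 1 by rewrite /z; lia.
have ze : z = i%:Z + (e - g i%:Z + g 1) * n%:Z by rewrite /z !mulrDl mulNr; lia.
case: eqP => [i1|i1].
- subst i.
  have e0 : (e - g 1%:Z + g 1) = 0.
    apply: (mulz_small n _ (z - 1) n0); lia.
  rewrite e0 mul0r addr0 in ze; rewrite ze ceil_one //; ring.
- have zle : z <= 0.
    rewrite leNgt; apply/negP => zg.
    have z1 : z = 1 by lia.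
    have e0 : (e - g i%:Z + g 1) = 0.
      apply: (mulz_small n _ (1 - i%:Z) n0); lia.
    rewrite e0 mul0r addr0 z1 in ze; apply: i1; lia.
  rewrite ceil_small //; [ring | lia].
Qed.

Lemma traj_aa n v k t' : (2 <= n)%N -> glide n v k -> is_word n v ->
  traj_rep n (rho_shift n k v) t' ->
  exists C, forall i, (1 <= i <= n)%N -> t' i = aa n v k i%:Z + C.
Proof.
move=> n2 hg hw [L [Rr [hL [hR [c hc]]]]].
have n0 : (0 < n)%N by lia.
have HL := chamber n (fun p => p) 0 (fun _ => 0) L n2
  ltac:(by move=> x; rewrite mul0r !addr0) ltac:(by []) hL.
have HR := chamber n (lstate n (rho_shift n k v)) k (aa n v k) Rr n2
  ltac:(by move=> x; rewrite lstate_phi phi_shift // (aa_spec n v k) //; ring)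
  (fun y e => aa_per n v k y e) hR.
exists (c - aa n v k 1) => i hi.
rewrite hc // HL // HR //; ring.
Qed.

Section Alpha2.
Variable R : realType.

Lemma mono n v k (alpha : nat -> R) : (2 <= n)%N -> glide n v k ->
  (forall i j, cross_left n v i j -> alpha i < alpha j) ->
  forall i j : nat, (1 <= i <= n)%N -> (1 <= j <= n)%N ->
  aa n v k j%:Z < aa n v k i%:Z -> alpha j < alpha i.
Proof.
move=> n2 hg Hal i j hi hj lt.
have hn : n%:Z <= (aa n v k i%:Z - aa n v k j%:Z) * n%:Z by nia.
case: (ltngtP i j) => ij.
- have := cross_main R n v alpha i%:Z j%:Z n2 Hal ltac:(lia).
  rewrite !cyl_nat //; apply.
  rewrite !(aa_spec n v k) //. rewrite mulrBl in hn; lia.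
- have := cross_main R n v alpha i%:Z (j%:Z + n%:Z) n2 Hal ltac:(lia).
  rewrite cyl_per !cyl_nat //; apply.
  rewrite phi_per !(aa_spec n v k) //. rewrite mulrBl in hn; lia.
- subst j; exfalso; lia.
Qed.

Lemma nonconst n v k (alpha : nat -> R) : (2 <= n)%N -> (1 <= size v)%N ->
  is_word n v -> glide n v k ->
  (forall i j, cross_left n v i j -> alpha i < alpha j) ->
  exists i j : nat, [/\ (1 <= i <= n)%N, (1 <= j <= n)%N & aa n v k i%:Z != aa n v k j%:Z].
Proof.
move=> n2 v1 hw hg Hal.
have n0 : (0 < n)%N by lia.
case: (classic (exists i j : nat, [/\ (1 <= i <= n)%N, (1 <= j <= n)%N &
   aa n v k i%:Z != aa n v k j%:Z])) => // H; exfalso.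
have H' : forall i j : nat, (1 <= i <= n)%N -> (1 <= j <= n)%N -> aa n v k i%:Z = aa n v k j%:Z.
  move=> i j hi hj; case: (eqVneq (aa n v k i%:Z) (aa n v k j%:Z)) => // ne.
  by exfalso; apply: H; exists i, j.
set i0 := nth 0%N (rev v) 0.
have i0n : (i0 < n)%N.
  have : i0 \in rev v by apply: mem_nth; rewrite size_rev.
  rewrite mem_rev => hin; move: hw; rewrite /is_word => /allP /(_ _ hin); done.
set p : nat := if i0 == 0%N then n else i0.
have hp : (1 <= p <= n)%N by rewrite /p; case: eqP => h; lia.
apply: (strict_cross R n v alpha p%:Z n2 v1 Hal).
- rewrite /p -/i0; case: (eqVneq i0 0%N) => [e0|ne].
    by rewrite e0 /= modzz.
  rewrite modz_small //; lia.
- case: (ltngtP p n) => pn.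
  + have -> : p%:Z + 1 = (p.+1)%:Z by lia.
    rewrite !(aa_spec n v k) // (H' p.+1 p) //; try lia.
  + lia.
  + have -> : p%:Z + 1 = 1 + n%:Z by lia.
    rewrite phi_per !(aa_spec n v k) // (H' 1%N p) //; try lia.
Qed.

End Alpha2.

Section Real.
Variable R : realType.

Lemma sum_neg_one (r : seq nat) (F : nat -> R) (i0 : nat) : uniq r ->
  (forall i, i \in r -> F i <= 0) -> i0 \in r -> F i0 < 0 ->
  \sum_(i <- r) F i < 0.
Proof.
move=> ur hle hi0 hlt; rewrite (bigD1_seq i0) //=.
have : \sum_(i <- r | i != i0) F i <= 0.
  rewrite big_seq_cond; apply: sumr_le0 => i /andP [hi _]; exact: hle.
move=> h; lra.
Qed.

Lemma sum_le0_seq (r : seq nat) (F : nat -> R) :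
  (forall i, i \in r -> F i <= 0) -> \sum_(i <- r) F i <= 0.
Proof. move=> h; rewrite big_seq; exact: sumr_le0. Qed.

Lemma key_ineq (n : nat) (a x : nat -> R) : (0 < n)%N ->
  \sum_(1 <= i < n.+1) x i = 0 ->
  (forall i, (1 <= i <= n)%N -> x i != 0) ->
  (forall i j, (1 <= i <= n)%N -> (1 <= j <= n)%N -> 0 < x i -> x j < 0 -> a i <= a j) ->
  (exists i j, [/\ (1 <= i <= n)%N, (1 <= j <= n)%N & a i != a j]) ->
  \sum_(1 <= i < n.+1) a i * x i < 0.
Proof.
move=> n0 hsum hnz hmono [i1 [j1 [hi1 hj1 hne]]].
set I := index_iota 1 n.+1.
have memI : forall i, (i \in I) = (1 <= i <= n)%N.
  by move=> i; rewrite mem_index_iota.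
have uI : uniq I by apply: iota_uniq.
pose p i := if 0 < x i then x i else 0.
pose q i := if x i < 0 then - x i else 0.
have hx : forall i, x i = p i - q i.
  move=> i; rewrite /p /q; case: (ltrgtP (x i) 0) => h; lra.
have p0 : forall i, 0 <= p i by move=> i; rewrite /p; case: ifP => h //; lra.
have q0 : forall i, 0 <= q i by move=> i; rewrite /q; case: ifP => h //; lra.
set Sp := \sum_(i <- I) p i.
set Sq := \sum_(i <- I) q i.
have hS : Sp = Sq.
  have : \sum_(i <- I) x i = Sp - Sq.
    by rewrite /Sp /Sq -sumrB; apply: eq_bigr => i _; rewrite hx.
  rewrite hsum => h; lra.
set T := \sum_(j <- I) q j * a j.
set D := \sum_(i <- I) \sum_(j <- I) p i * q j * (a i - a j).
have hD : D = Sp * \sum_(i <- I) a i * x i.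
  have e1 : D = \sum_(i <- I) (p i * a i * Sq - p i * T).
    apply: eq_bigr => i _; rewrite /Sq /T !mulr_sumr -sumrB.
    apply: eq_bigr => j _; ring.
  rewrite e1 sumrB -!mulr_suml -hS.
  have -> : \sum_(i <- I) a i * x i = \sum_(i <- I) p i * a i - T.
    rewrite /T -sumrB; apply: eq_bigr => i _; rewrite hx; ring.
  rewrite /Sp; ring.
have [ip [hip xip]] : exists i, (1 <= i <= n)%N /\ 0 < x i.
  case: (classic (exists i, (1 <= i <= n)%N /\ 0 < x i)) => // H; exfalso.
  have : \sum_(i <- I) x i < 0.
    apply: (sum_neg_one _ _ 1%N) => //.
    - move=> i; rewrite memI => hi; rewrite leNgt; apply/negP => h; apply: H; by exists i.
    - by rewrite memI; lia.
    - have := hnz 1%N ltac:(lia); case: (ltrgtP (x 1%N) 0) => h //.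
      by move=> _; exfalso; apply: H; exists 1%N; split => //; lia.
  by rewrite /I hsum ltxx.
have [jn [hjn xjn]] : exists i, (1 <= i <= n)%N /\ x i < 0.
  case: (classic (exists i, (1 <= i <= n)%N /\ x i < 0)) => // H; exfalso.
  have : \sum_(i <- I) (- x i) < 0.
    apply: (sum_neg_one _ _ 1%N) => //.
    - move=> i; rewrite memI => hi; rewrite oppr_le0 leNgt; apply/negP => h; apply: H; by exists i.
    - by rewrite memI; lia.
    - have := hnz 1%N ltac:(lia); case: (ltrgtP (x 1%N) 0) => h //.
      + by move=> _; exfalso; apply: H; exists 1%N; split => //; lia.
      + by move=> _; rewrite oppr_lt0.
  by rewrite sumrN /I hsum oppr0 ltxx.
have [i0 [j0 [hi0 hj0 xi0 xj0 aij]]] : exists i j, [/\ (1 <= i <= n)%N, (1 <= j <= n)%N,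
    0 < x i, x j < 0 & a i < a j].
  case: (classic (exists i j, [/\ (1 <= i <= n)%N, (1 <= j <= n)%N,
    0 < x i, x j < 0 & a i < a j])) => // H; exfalso.
  have Heq : forall i j, (1 <= i <= n)%N -> (1 <= j <= n)%N -> 0 < x i -> x j < 0 -> a i = a j.
    move=> i j hi hj xi xj; have := hmono i j hi hj xi xj.
    rewrite le_eqVlt => /orP [/eqP // | lt]; exfalso; apply: H; by exists i, j.
  have Hall : forall k, (1 <= k <= n)%N -> a k = a jn.
    move=> k hk; have := hnz k hk; case: (ltrgtP (x k) 0) => h // _.
    + by rewrite -(Heq ip k) // (Heq ip jn).
    + exact: Heq.
  by move: hne; rewrite (Hall i1) // (Hall j1) // eqxx.
have hDneg : D < 0.
  apply: (sum_neg_one _ _ i0); rewrite ?memI //.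
  - move=> i hi; apply: sum_le0_seq => j hj; move: hi hj; rewrite !memI => hi hj.
    rewrite /p /q; case: ifP => hxi; case: ifP => hxj; try (rewrite ?mulr0 ?mul0r //; fail).
    have := hmono i j hi hj hxi hxj => hle.
    have hP : 0 <= x i * - x j by nra.
    nra.
  - cbv beta; apply: (sum_neg_one _ _ j0); rewrite ?memI //.
    + move=> j hj; rewrite memI in hj.
      rewrite /p /q; case: ifP => hxi; case: ifP => hxj; try (rewrite ?mulr0 ?mul0r //; fail).
      have := hmono i0 j hi0 hj hxi hxj => hle.
      have hP : 0 <= x i0 * - x j by nra.
      nra.
    + rewrite /p /q xi0 xj0.
      have hP : 0 < x i0 * - x j0 by nra.
      nra.
have Sp0 : 0 <= Sp by rewrite /Sp big_seq; apply: sumr_ge0 => i _; exact: p0.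
rewrite ltNge; apply/negP => h.
have : 0 <= Sp * \sum_(i <- I) a i * x i by apply: mulr_ge0.
rewrite -hD; lra.
Qed.

End Real.

Section Final.
Variable R : realType.

Lemma ln_prod (r : seq nat) (F : nat -> R) : (forall i, i \in r -> 0 < F i) ->
  \sum_(i <- r) ln (F i) = ln (\prod_(i <- r) F i).
Proof.
elim: r => [|i r IH] h; first by rewrite !big_nil ln1.
have hr : forall j, j \in r -> 0 < F j by move=> j hj; apply: h; rewrite inE hj orbT.
rewrite !big_cons IH // lnM ?posrE //; first by apply: h; rewrite inE eqxx.
rewrite big_seq; apply: prodr_gt0 => j hj; exact: hr.
Qed.

Lemma B_sign (al b c : R) : c < b -> al < c \/ b < al ->
  0 < (b - al) / (c - al) /\
  (al < c -> 0 < ln ((b - al) / (c - al))) /\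
  (b < al -> ln ((b - al) / (c - al)) < 0).
Proof.
move=> cb [h|h].
- have hc : 0 < c - al by lra.
  have gt1 : 1 < (b - al) / (c - al) by rewrite ltr_pdivlMr //; lra.
  split; first by apply: divr_gt0; lra.
  split; first by move=> _; apply: ln_gt0.
  move=> h'; exfalso; lra.
- have E : (b - al) / (c - al) = (al - b) / (al - c).
    rewrite -[b - al]opprB -[c - al]opprB invrN mulrNN //.
  rewrite E.
  have hc : 0 < al - c by lra.
  have lt1 : (al - b) / (al - c) < 1 by rewrite ltr_pdivrMr //; lra.
  have gt0 : 0 < (al - b) / (al - c) by apply: divr_gt0; lra.
  split => //; split; first by move=> h'; exfalso; lra.
  by move=> _; apply: ln_lt0; rewrite gt0 lt1.
Qed.

End Final.

Theorem proposition8p3 (R : realType) (n : nat) (u v : seq nat) (k2 : int)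
    (alpha : nat -> R) (b c : R) (t' : nat -> int) :
  (3 <= n)%N ->
  reduced n u -> (exists k1 : int, glide n u k1) ->
  reduced n v -> (1 <= size v)%N -> glide n v k2 ->
  reduced n (v ++ u) ->
  (forall i j : nat, tri n v u i j -> alpha i < alpha j) ->
  c < b ->
  (forall j : nat, (1 <= j <= n)%N -> alpha j < c \/ b < alpha j) ->
  \prod_(1 <= j < n.+1) (b - alpha j) = \prod_(1 <= j < n.+1) (c - alpha j) ->
  traj_rep n (rho_shift n k2 v) t' ->
  \sum_(1 <= i < n.+1) (t' i)%:~R * ln ((b - alpha i) / (c - alpha i)) < 0.
Proof.
move=> n3 _ _ hv v1 hg _ Hal cb hcomp hprod ht.
have n2 : (2 <= n)%N by lia.
have n0 : (0 < n)%N by lia.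
have hw := hv.1.
have [C hC] := traj_aa n v k2 t' n2 hg hw ht.
have Hal' : forall i j, cross_left n v i j -> alpha i < alpha j.
  by move=> i j h; apply: Hal; left.
set x := fun i => ln ((b - alpha i) / (c - alpha i)).
have hsum : \sum_(1 <= i < n.+1) x i = 0.
  rewrite /x ln_prod; last first.
    move=> i; rewrite mem_index_iota => hi.
    by have [] := B_sign _ _ _ _ cb (hcomp i ltac:(lia)).
  rewrite prodf_div hprod divff ?ln1 //.
  rewrite prodf_seq_neq0; apply/allP => i; rewrite mem_index_iota => hi /=.
  have := hcomp i ltac:(lia); move=> [h|h]; apply/eqP; lra.
have -> : \sum_(1 <= i < n.+1) (t' i)%:~R * ln ((b - alpha i) / (c - alpha i)) =
    \sum_(1 <= i < n.+1) ((aa n v k2 i%:Z)%:~R * x i) + C%:~R * \sum_(1 <= i < n.+1) x i.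
  rewrite mulr_sumr -big_split; apply: eq_big_nat => i hi.
  rewrite hC; last by lia.
  by rewrite intrD mulrDl /x.
rewrite hsum mulr0 addr0.
apply: key_ineq => //.
- move=> i hi; have [_ [h1 h2]] := B_sign _ _ _ _ cb (hcomp i hi).
  case: (hcomp i hi) => h; apply/eqP => e; rewrite /x in e.
  + by move: (h1 h); rewrite e ltxx.
  + by move: (h2 h); rewrite e ltxx.
- move=> i j hi hj xi xj.
  have [_ [hi1 hi2]] := B_sign _ _ _ _ cb (hcomp i hi).
  have [_ [hj1 hj2]] := B_sign _ _ _ _ cb (hcomp j hj).
  have ai : alpha i < c.
    case: (hcomp i hi) => // h; have := hi2 h; rewrite /x in xi; lra.
  have aj : b < alpha j.
    case: (hcomp j hj) => // h; have := hj1 h; rewrite /x in xj; lra.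
  rewrite ler_int leNgt; apply/negP => lt.
  have := mono R n v k2 alpha n2 hg Hal' i j hi hj lt; lra.
- have [i [j [hi hj hne]]] := nonconst R n v k2 alpha n2 v1 hw hg Hal'.
  by exists i, j; split => //; rewrite eqr_int.
Qed.
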